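(* Let $R$ be an arithmetic ring which is self fp-injective. Then $\lambda\text{-}\dim(R)\le 2$.
   Context: All rings are commutative with identity. $R$ is arithmetic if $R_M$ is a valuation ring (ideals totally ordered by inclusion) for every maximal ideal $M$. An $R$-module $E$ is fp-injective if $\mathrm{Ext}^1_R(F,E)=0$ for every finitely presented $R$-module $F$; $R$ is self fp-injective if $R$ is fp-injective as an $R$-module. For an $R$-module $E$, $\lambda_R(E)$ is the supremum of the $n$ for which there is an exact sequence $F_n\to\cdots\to F_0\to E\to0$ with $F_i$ free of finite rank ($-1$ if $E$ is not finitely generated); $\lambda\text{-}\dim(R)$ is the least $n$ (or $\infty$) such that $\lambda_R(E)\ge n$ implies $\lambda_R(E)=\infty$ for all $E$. *)

(* Defs.v *)
From HB Require Import structures.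
From mathcomp Require Import all_boot all_order all_algebra.
Set Implicit Arguments. Unset Strict Implicit. Unset Printing Implicit Defensive.
Import GRing.Theory.
Local Open Scope ring_scope.

(* Free modules of finite rank: row spaces ['rV[R]_k]; R-linear maps between
   them are matrices acting on the right ([v *m A]). *)

Section Defs.
Variable R : comPzRingType.

Definition is_ideal (I : R -> Prop) : Prop :=
  I 0 /\ (forall x y, I x -> I y -> I (x + y)) /\ (forall r x, I x -> I (r * x)).

Definition is_maximal_ideal (M : R -> Prop) : Prop :=
  is_ideal M /\ ~ M 1 /\
  forall J : R -> Prop, is_ideal J -> (forall x, M x -> J x) ->
    (forall x, J x <-> M x) \/ J 1.

(* R_M is a valuation ring: for any two elements of R_M one divides the other.
   Elements of R_M are fractions a/s (s notin M) and s is a unit, so it suffices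
   to compare images a/1, b/1; "b/1 = (c/t)(a/1) in R_M" unfolds to
   "u (t b - c a) = 0 for some u notin M", i.e. s b = c' a with s notin M. *)
Definition localization_is_valuation (M : R -> Prop) : Prop :=
  forall a b : R,
    (exists s c, ~ M s /\ s * b = c * a) \/ (exists s c, ~ M s /\ s * a = c * b).

Definition arithmetic : Prop :=
  forall M, is_maximal_ideal M -> localization_is_valuation M.

(* There is an exact sequence F_n -> ... -> F_1 -> F_0 -> E -> 0 with F_i free
   of finite rank: F_i = 'rV_(k i), d_(i+1) : F_(i+1) -> F_i is (v |-> v *m A i),
   and p : F_0 -> E. *)
Definition has_free_presentation_of_length (E : lmodType R) (n : nat) : Prop :=
  exists (k : nat -> nat) (A : forall i, 'M[R]_(k i.+1, k i))
         (p : {linear 'rV[R]_(k 0) -> E}),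
    (forall e : E, exists v, p v = e) /\
    ((0 < n)%N -> forall v : 'rV[R]_(k 0), p v = 0 <-> exists w, v = w *m A 0%N) /\
    (forall i : nat, (i.+2 <= n)%N ->
       forall v : 'rV[R]_(k i.+1), v *m A i = 0 <-> exists w, v = w *m A i.+1).

Definition lambda_ge (E : lmodType R) (n : nat) : Prop :=
  has_free_presentation_of_length E n.

Definition lambda_infty (E : lmodType R) : Prop := forall n, lambda_ge E n.

Definition finitely_presented (F : lmodType R) : Prop := lambda_ge F 1.

(* Ext^1_R(F,E) = 0, via Yoneda: every extension 0 -> E -> X -> F -> 0 splits. *)
Definition Ext1_vanishes (F E : lmodType R) : Prop :=
  forall (X : lmodType R) (i : {linear E -> X}) (q : {linear X -> F}),
    injective i -> (forall f, exists x, q x = f) ->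
    (forall x, q x = 0 <-> exists e, x = i e) ->
    exists s : {linear F -> X}, forall f, q (s f) = f.

Definition fp_injective (E : lmodType R) : Prop :=
  forall F : lmodType R, finitely_presented F -> Ext1_vanishes F E.

Definition self_fp_injective : Prop := fp_injective R^o.

(* lambda-dim(R) <= m : for every n <= m... equivalently (monotonicity)
   lambda_R(E) >= m implies lambda_R(E) = infinity for all E. *)
Definition lambda_dim_le (m : nat) : Prop :=
  forall E : lmodType R, lambda_ge E m -> lambda_infty E.

End Defs.

(* Main.v *)
Require Import Defs.
From HB Require Import structures.
From mathcomp Require Import all_boot all_order all_algebra.
From mathcomp Require Import ring.
From mathcomp Require Import fingroup perm.
From mathcomp Require Import boolp classical_sets.
Set Implicit Arguments. Unset Strict Implicit. Unset Printing Implicit Defensive.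
Import GRing.Theory.
Local Open Scope ring_scope.

Section Quot.
Variables (R : comPzRingType) (m n : nat) (N : 'M[R]_(m,n)).

Definition inN (x : 'rV[R]_n) := exists z : 'rV_m, x = z *m N.
Lemma inN0 : inN 0. Proof. by exists 0; rewrite mul0mx. Qed.
Lemma inND x y : inN x -> inN y -> inN (x + y).
Proof. by move=> [a ->] [b ->]; exists (a + b); rewrite mulmxDl. Qed.
Lemma inNZ r x : inN x -> inN (r *: x).
Proof. by move=> [a ->]; exists (r *: a); rewrite scalemxAl. Qed.
Lemma inNN x : inN x -> inN (- x).
Proof. by move=> h; rewrite -scaleN1r; apply: inNZ. Qed.
Lemma inNB x y : inN x -> inN y -> inN (x - y).
Proof. by move=> hx hy; apply: inND => //; apply: inNN. Qed.

Lemma ex_rep x : exists y, `[< inN (x - y) >].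
Proof. by exists x; apply/asboolP; rewrite subrr; apply: inN0. Qed.
Definition canon x := xchoose (ex_rep x).
Lemma canonP x : inN (x - canon x).
Proof. exact/asboolP/(xchooseP (ex_rep x)). Qed.
Lemma canon_eq x y : inN (x - y) -> canon x = canon y.
Proof.
move=> h; apply: eq_xchoose => z; apply/asboolP/asboolP => hz.
  have -> : y - z = (x - z) - (x - y) by rewrite opprB [RHS]addrC addrA subrK.
  exact: inNB.
have -> : x - z = (x - y) + (y - z) by rewrite addrA subrK.
exact: inND.
Qed.
Lemma canon_id x : canon (canon x) = canon x.
Proof. apply: canon_eq; rewrite -opprB; apply: inNN; exact: canonP. Qed.

Definition qT := {x : 'rV[R]_n | canon x == x}.
HB.instance Definition _ := Choice.copy qT {x : 'rV[R]_n | canon x == x}.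

Definition qpi (x : 'rV[R]_n) : qT := exist _ (canon x) (introT eqP (canon_id x)).
Lemma qpiP x y : qpi x = qpi y <-> inN (x - y).
Proof.
split; last by move=> h; apply: val_inj; rewrite /= (canon_eq h).
move=> /(congr1 val) /= e.
have h1 := canonP x; have h2 := canonP y.
have := inNB h1 h2; rewrite e.
by rewrite opprB addrA -(addrA x) (addrC (- canon y)) subrr addr0.
Qed.
Lemma qpi_val (a : qT) : qpi (val a) = a.
Proof. by apply: val_inj => /=; case: a => x /= /eqP. Qed.
Lemma val_pi x : inN (val (qpi x) - x).
Proof. by rewrite -opprB; apply: inNN; apply: canonP. Qed.
Lemma qpi_valE x : qpi (val (qpi x)) = qpi x.
Proof. exact: qpi_val. Qed.

Definition qzero := qpi 0.
Definition qadd (a b : qT) := qpi (val a + val b).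
Definition qopp (a : qT) := qpi (- val a).
Definition qscale (r : R) (a : qT) := qpi (r *: val a).

Lemma qpi_add x y : qadd (qpi x) (qpi y) = qpi (x + y).
Proof.
apply/qpiP; have := inND (val_pi x) (val_pi y).
by rewrite addrACA opprD.
Qed.
Lemma qpi_opp x : qopp (qpi x) = qpi (- x).
Proof. by apply/qpiP; have := inNN (val_pi x); rewrite opprB opprK addrC. Qed.
Lemma qpi_scale r x : qscale r (qpi x) = qpi (r *: x).
Proof. by apply/qpiP; have := inNZ r (val_pi x); rewrite scalerBr. Qed.

Lemma qaddA : associative qadd.
Proof.
move=> a b c; rewrite -(qpi_val a) -(qpi_val b) -(qpi_val c).
by rewrite !qpi_add addrA.
Qed.
Lemma qaddC : commutative qadd.
Proof. by move=> a b; rewrite /qadd addrC. Qed.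
Lemma qadd0 : left_id qzero qadd.
Proof. by move=> a; rewrite -(qpi_val a) /qzero qpi_add add0r. Qed.
Lemma qaddN : left_inverse qzero qopp qadd.
Proof. by move=> a; rewrite -(qpi_val a) qpi_opp qpi_add addNr. Qed.

HB.instance Definition _ := GRing.isZmodule.Build qT qaddA qaddC qadd0 qaddN.

Lemma qscaleA a b v : qscale a (qscale b v) = qscale (a * b) v.
Proof. by rewrite -(qpi_val v) !qpi_scale scalerA. Qed.
Lemma qscale1 : left_id 1 qscale.
Proof. by move=> v; rewrite -(qpi_val v) qpi_scale scale1r. Qed.
Lemma qscaleDr : right_distributive qscale +%R.
Proof.
move=> r u v; rewrite -(qpi_val u) -(qpi_val v); move: (val u) (val v) => x y.
change (qscale r (qadd (qpi x) (qpi y)) = qadd (qscale r (qpi x)) (qscale r (qpi y))).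
rewrite (qpi_scale r x) (qpi_scale r y) (qpi_add (r *: x)) (qpi_add x y).
by rewrite qpi_scale scalerDr.
Qed.
Lemma qscaleDl v : {morph qscale^~ v : a b / a + b}.
Proof.
move=> a b; rewrite -(qpi_val v); move: (val v) => x.
change (qscale (a + b) (qpi x) = qadd (qscale a (qpi x)) (qscale b (qpi x))).
by rewrite (qpi_scale a x) (qpi_scale b x) qpi_add qpi_scale scalerDl.
Qed.
HB.instance Definition _ := GRing.Zmodule_isLmodule.Build R qT qscaleA qscale1 qscaleDr qscaleDl.

Lemma qpi_is_linear : linear qpi.
Proof.
move=> r x y.
change (qpi (r *: x + y) = qadd (qscale r (qpi x)) (qpi y)).
by rewrite qpi_scale qpi_add.
Qed.
HB.instance Definition _ := GRing.isLinear.Build R _ qT _ qpi qpi_is_linear.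

Lemma qpi_eq0 x : qpi x = 0 <-> inN x.
Proof. rewrite -[0 : qT]/(qpi 0); rewrite qpiP subr0; done. Qed.
Lemma qpi_surj (a : qT) : exists x, qpi x = a.
Proof. by exists (val a); apply: qpi_val. Qed.

End Quot.



Section Ext.
Variables (R : comPzRingType) (a b : nat) (P : 'M[R]_(a,b)) (g : 'cV[R]_a).
Definition Km := row_mx g (- P) : 'M_(a, 1 + b).
Definition Xm := qT Km.
Definition Fm := qT P.
Definition ifun (r : R^o) : Xm := qpi Km (row_mx (r%:M : 'rV_1) 0).
Lemma ifun_lin : linear ifun.
Proof.
move=> r x y; rewrite /ifun -linearP; congr (qpi Km _).
apply/matrixP => i j; rewrite !mxE; case: splitP => k _; rewrite !mxE //.
  by case: (i == k); rewrite ?mulr1n ?mulr0n ?mulr0 ?addr0.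
by rewrite mulr0 addr0.
Qed.
HB.instance Definition _ := GRing.isLinear.Build R R^o Xm _ ifun ifun_lin.

Definition qfun (x : Xm) : Fm := qpi P (rsubmx (val x)).
Lemma inN_rsub w : inN Km w -> inN P (rsubmx w).
Proof.
by move=> [z ->]; exists (- z); rewrite mul_mx_row row_mxKr mulmxN mulNmx.
Qed.
Lemma qfun_pi w : qfun (qpi Km w) = qpi P (rsubmx w).
Proof. apply/qpiP; rewrite -linearB; apply: inN_rsub; exact: val_pi. Qed.
Lemma qfun_lin : linear qfun.
Proof.
move=> r x y.
have -> : r *: x + y = qpi Km (r *: val x + val y) by rewrite linearP /= !qpi_val.
by rewrite qfun_pi !linearP.
Qed.
HB.instance Definition _ := GRing.isLinear.Build R Xm Fm _ qfun qfun_lin.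

Lemma Fm_fp : finitely_presented Fm.
Proof.
pose k := fun i : nat => if i is 0 then b else a.
pose A := fun i : nat => match i return 'M[R]_(k i.+1, k i) with 0 => P | S _ => 0 end.
exists k, A, (qpi P : {linear 'rV[R]_(k 0) -> Fm}); split; first exact: qpi_surj.
split; last by [].
by move=> _ v; rewrite qpi_eq0.
Qed.

Lemma fp_ext : self_fp_injective R -> (forall v : 'rV_a, v *m P = 0 -> v *m g = 0) ->
  exists c : 'cV_b, g = P *m c.
Proof.
move=> fpi hg.
have inj : injective (ifun : R^o -> Xm).
  move=> r r' /qpiP [z]; rewrite /Km mul_mx_row opp_row_mx add_row_mx subr0.
  move=> /eq_row_mx [e1 /esym e2].
  have : z *m P = 0 by apply: oppr_inj; rewrite -mulmxN e2 oppr0.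
  move=> /hg; rewrite -e1 => h; apply/eqP; rewrite -subr_eq0.
  by have := congr1 (fun M : 'M_1 => M 0 0) h; rewrite !mxE eqxx /= !mulr1n => ->.
have surj : forall f : Fm, exists x, qfun x = f.
  move=> f; have [z <-] := qpi_surj f; exists (qpi Km (row_mx 0 z)).
  by rewrite qfun_pi row_mxKr.
have ker : forall x, qfun x = 0 <-> exists e, x = ifun e.
  move=> x; split; last first.
    by move=> [e ->]; rewrite /ifun qfun_pi row_mxKr linear0.
  rewrite /qfun qpi_eq0 => -[z hz].
  exists ((lsubmx (val x) + z *m g) 0 0).
  rewrite -{1}(qpi_val x) /ifun; apply/qpiP; exists (- z).
  rewrite -{1}(hsubmxK (val x)) hz -mx11_scalar opp_row_mx add_row_mx /Km mul_mx_row.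
  by rewrite subr0 opprD addrA subrr add0r !mulNmx mulmxN opprK.
have [s hs] := fpi Fm Fm_fp Xm ifun qfun inj surj ker.
pose phi z := s (qpi P z) - qpi Km (row_mx 0 z).
have phiD : {morph phi : x y / x + y}.
  move=> x y; rewrite /phi !linearD /=.
  have -> : row_mx (0 : 'rV_1) (x + y) = row_mx 0 x + row_mx 0 y by rewrite add_row_mx addr0.
  by rewrite linearD opprD addrACA.
have phiZ : forall r z, phi (r *: z) = r *: phi z.
  move=> r z; rewrite /phi !linearZ /=.
  have -> : row_mx (0 : 'rV_1) (r *: z) = r *: row_mx 0 z by rewrite scale_row_mx scaler0.
  by rewrite linearZ scalerBr.
have phi0 : phi 0 = 0 by rewrite -(scale0r 0) phiZ scale0r.
have phik : forall z, exists e, phi z = ifun e.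
  move=> z; apply/ker; rewrite /phi linearB /= hs qfun_pi row_mxKr subrr; done.
have [cf hcf] := fin_all_exists (fun j : 'I_b => phik (delta_mx 0 j)).
exists (- \col_j cf j).
have key : forall v : 'rV_a, (v *m g) 0 0 = - (v *m P *m \col_j cf j) 0 0.
  move=> v; apply/oppr_inj; rewrite opprK; apply: inj.
  have e1 : phi (v *m P) = - ifun ((v *m g) 0 0).
    rewrite /phi (_ : qpi P (v *m P) = 0); last by apply/qpi_eq0; exists v.
    rewrite linear0 sub0r; congr (- _); apply/qpiP; exists (- v).
    rewrite /Km mul_mx_row -mx11_scalar opp_row_mx add_row_mx.
    by rewrite sub0r subr0 !mulNmx mulmxN opprK.
  rewrite linearN /= -e1 {1}(row_sum_delta (v *m P)).
  rewrite (big_morph phi phiD phi0) mxE.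
  rewrite linear_sum; apply: eq_bigr => j _; rewrite phiZ hcf linearZ /=.
  by rewrite [(\col_j0 _) _ _]mxE.
apply/matrixP => i j; rewrite (ord1 j).
have := key (delta_mx 0 i); rewrite -!rowE !mxE => ->.
rewrite -sumrN; apply: eq_bigr => k _; by rewrite !mxE mulrN.
Qed.
End Ext.


Section Span.
Variables (R : comPzRingType).

Inductive spn (V : lmodType R) (s : seq V) : V -> Prop :=
| span0 : spn s 0
| spanD x y : spn s x -> spn s y -> spn s (x + y)
| spanZ r x : spn s x -> spn s (r *: x)
| spanI x : x \in s -> spn s x.

Lemma span_sub (V : lmodType R) (s s' : seq V) v :
  {subset s <= s'} -> spn s v -> spn s' v.
Proof.
move=> ss; elim=> [|x y _ hx _ hy|r x _ hx|x hx].
- exact: span0.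
- exact: spanD.
- exact: spanZ.
- by apply: spanI; apply: ss.
Qed.

Lemma span_map (V W : lmodType R) (f : V -> W) (s : seq V) v :
  f 0 = 0 -> (forall x y, f (x + y) = f x + f y) -> (forall r x, f (r *: x) = r *: f x) ->
  spn s v -> spn (map f s) (f v).
Proof.
move=> f0 fD fZ; elim=> [|x y _ hx _ hy|r x _ hx|x hx].
- rewrite f0; exact: span0.
- rewrite fD; exact: spanD.
- rewrite fZ; exact: spanZ.
- by apply: spanI; apply: map_f.
Qed.

Lemma span_sum (V : lmodType R) (s : seq V) (I : finType) (F : I -> V) :
  (forall i, spn s (F i)) -> spn s (\sum_i F i).
Proof.
move=> h; apply: (big_ind (spn s)) => //; [exact: span0|exact: spanD].
Qed.

Definition mxs p (s : seq 'rV[R]_p) : 'M_(size s, p) := \matrix_(k < size s) s`_k.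

Lemma span_mx p (s : seq 'rV[R]_p) v :
  spn s v -> exists z : 'rV_(size s), v = z *m mxs s.
Proof.
elim=> [|x y _ [z1 ->] _ [z2 ->]|r x _ [z ->]|x hx].
- by exists 0; rewrite mul0mx.
- by exists (z1 + z2); rewrite mulmxDl.
- by exists (r *: z); rewrite scalemxAl.
- have hi : (index x s < size s)%N by rewrite index_mem.
  exists (delta_mx 0 (Ordinal hi)); rewrite -rowE rowK /=.
  by rewrite nth_index.
Qed.

Lemma mx_span p q (s : seq 'rV[R]_p) (Q : 'M_(p, q)) (z : 'rV_(size s)) :
  (forall g, g \in s -> g *m Q = 0) -> z *m mxs s *m Q = 0.
Proof.
move=> h; rewrite (mulmx_sum_row z) mulmx_suml big1 // => i _.
by rewrite -scalemxAl rowK h ?scaler0 // mem_nth.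
Qed.

End Span.

Section Loc.
Variables (R : comPzRingType) (M : R -> Prop).
Hypotheses (M1 : ~ M 1) (Mmul : forall a b, ~ M a -> ~ M b -> ~ M (a * b)).

Definition FGl (V : lmodType R) (S : V -> Prop) :=
  exists x, ~ M x /\ exists s : seq V, (forall g, g \in s -> S g) /\ forall v, S v -> spn s (x *: v).

Lemma FGl_map (V W : lmodType R) (S : V -> Prop) (T : W -> Prop) (f : V -> W) (g : W -> V) c :
  ~ M c -> f 0 = 0 -> (forall x y, f (x + y) = f x + f y) -> (forall r x, f (r *: x) = r *: f x) ->
  (forall v, S v -> T (f v)) -> (forall w, T w -> S (g w) /\ f (g w) = c *: w) -> FGl S -> FGl T.
Proof.
move=> Mc f0 fD fZ hf hg [x [Mx [s [hs hspan]]]].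
exists (x * c); split; first exact: Mmul.
exists (map f s); split.
  by move=> _ /mapP [y ys ->]; apply: hf; apply: hs.
move=> w /hg [Sg e]; have := span_map f0 fD fZ (hspan _ Sg).
by rewrite fZ e scalerA.
Qed.

Definition RK p w (Q : 'M[R]_(p,w)) (v : 'rV_p) := v *m Q = 0.
Definition CK p w (Q : 'M[R]_(p,w)) (y : 'cV_w) := Q *m y = 0.
Definition Tr p w (Q : 'M[R]_(p,w)) := FGl (CK Q) -> FGl (RK Q).

Lemma Tr_inv p w (Q : 'M_(p,w)) (U U' : 'M_p) (V V' : 'M_w) t t' : ~ M t -> ~ M t' ->
  U' *m U = t%:M -> V *m V' = t'%:M -> V' *m V = t'%:M -> Tr (U *m Q *m V) -> Tr Q.
Proof.
move=> Mt Mt' eU eV eV' h hC.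
have hC2 : FGl (CK (U *m Q *m V)).
  apply: (FGl_map (f := fun y => V' *m y) (g := fun y => t *: (V *m y)) (c := t * t')) hC.
  - exact: Mmul.
  - by rewrite mulmx0.
  - by move=> ??; rewrite mulmxDr.
  - by move=> ??; rewrite scalemxAr.
  - move=> y; rewrite /CK => hy.
    by rewrite -!mulmxA (mulmxA V) eV mul_scalar_mx -scalemxAr hy scaler0 mulmx0.
  - move=> y; rewrite /CK => hy; split.
      rewrite -scalemxAr -mul_scalar_mx -eU -!mulmxA.
      by move: hy; rewrite -!mulmxA => ->; rewrite mulmx0.
    by rewrite -scalemxAr mulmxA eV' mul_scalar_mx scalerA.
have [x [Mx [s [hs hsp]]]] := h hC2.
apply: (FGl_map (f := fun v => t' *: (v *m U)) (g := fun v => v *m U') (c := t' * t)) (h hC2).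
- exact: Mmul.
- by rewrite mul0mx scaler0.
- by move=> ??; rewrite mulmxDl scalerDr.
- by move=> ??; rewrite -scalemxAl !scalerA mulrC.
- move=> v; rewrite /RK !mulmxA => hv.
  by rewrite -scalemxAl -mul_mx_scalar -eV !mulmxA hv mul0mx.
- move=> v; rewrite /RK => hv; split.
    by rewrite !mulmxA -(mulmxA v) eU mul_mx_scalar -!scalemxAl hv mul0mx scaler0.
  by rewrite -mulmxA eU mul_mx_scalar scalerA.
Qed.

Lemma CK_block p w (a1 : 'M[R]_1) (Q3 : 'M_(p, w)) (y : 'cV_(1 + w)) :
  CK (block_mx a1 0 0 Q3) y <-> CK a1 (usubmx y) /\ CK Q3 (dsubmx y).
Proof.
rewrite /CK -{1}(vsubmxK y) mul_block_col !mul0mx addr0 add0r.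
split; first by move/eqP; rewrite col_mx_eq0 => /andP [/eqP -> /eqP ->].
by move=> [-> ->]; rewrite col_mx0.
Qed.

Lemma RK_block p w (a1 : 'M[R]_1) (Q3 : 'M_(p, w)) (v : 'rV_(1 + p)) :
  RK (block_mx a1 0 0 Q3) v <-> RK a1 (lsubmx v) /\ RK Q3 (rsubmx v).
Proof.
rewrite /RK -{1}(hsubmxK v) mul_row_block !mulmx0 addr0 add0r.
split; first by move/eqP; rewrite row_mx_eq0 => /andP [/eqP -> /eqP ->].
by move=> [-> ->]; rewrite row_mx0.
Qed.

Lemma Tr_block p w (a1 : 'M[R]_1) (Q3 : 'M_(p, w)) :
  Tr Q3 -> Tr (block_mx a1 0 0 Q3).
Proof.
move=> h3 hC.
have hCa : FGl (CK a1).
  apply: (FGl_map (f := @usubmx _ 1 w 1) (g := fun y => col_mx y 0) (c := 1)) hC => //.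
  - by rewrite linear0.
  - by move=> ??; rewrite linearD.
  - by move=> ??; rewrite linearZ.
  - by move=> v /CK_block [].
  - move=> y hy; rewrite col_mxKu scale1r; split => //.
    by apply/CK_block; rewrite col_mxKu col_mxKd; split => //; rewrite /CK mulmx0.
have hC3 : FGl (CK Q3).
  apply: (FGl_map (f := @dsubmx _ 1 w 1) (g := fun y => col_mx 0 y) (c := 1)) hC => //.
  - by rewrite linear0.
  - by move=> ??; rewrite linearD.
  - by move=> ??; rewrite linearZ.
  - by move=> v /CK_block [].
  - move=> y hy; rewrite col_mxKd scale1r; split => //.
    by apply/CK_block; rewrite col_mxKu col_mxKd; split => //; rewrite /CK mulmx0.
have ta : a1^T = a1 by rewrite [a1]mx11_scalar tr_scalar_mx.
have hRa : FGl (RK a1).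
  apply: (FGl_map (f := @trmx _ 1 1) (g := @trmx _ 1 1) (c := 1)) hCa => //.
  - by rewrite linear0.
  - by move=> ??; rewrite linearD.
  - by move=> ??; rewrite linearZ.
  - by move=> y; rewrite /CK /RK => hy; rewrite -ta -trmx_mul hy trmx0.
  - move=> v; rewrite /CK /RK => hv; rewrite trmxK scale1r; split => //.
    by rewrite -[a1]trmxK -trmx_mul ta hv trmx0.
have [x1 [Mx1 [s1 [hs1 hsp1]]]] := hRa.
have [x2 [Mx2 [s2 [hs2 hsp2]]]] := h3 hC3.
exists (x1 * x2); split; first exact: Mmul.
exists (map (fun g => row_mx g 0) s1 ++ map (fun g => row_mx 0 g) s2); split.
  move=> g; rewrite mem_cat => /orP [] /mapP [u us ->]; apply/RK_block;
    rewrite ?row_mxKl ?row_mxKr; split; rewrite /RK ?mul0mx //.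
  - exact: hs1.
  - exact: hs2.
move=> v /RK_block [hl hr].
have -> : (x1 * x2) *: v = row_mx (x2 *: (x1 *: lsubmx v)) 0 + row_mx 0 (x1 *: (x2 *: rsubmx v)).
  rewrite add_row_mx addr0 add0r !scalerA (mulrC x2) -scale_row_mx hsubmxK.
  done.
apply: spanD.
  have := span_map (f := fun g => row_mx g (0 : 'rV_p)) _ _ _ (spanZ x2 (hsp1 _ hl)).
  move=> H; apply: (span_sub _ (H _ _ _)).
  - by move=> z zi; rewrite mem_cat zi.
  - by rewrite row_mx0.
  - by move=> ??; rewrite add_row_mx addr0.
  - by move=> ??; rewrite scale_row_mx scaler0.
have := span_map (f := fun g => row_mx (0 : 'rV_1) g) _ _ _ (spanZ x1 (hsp2 _ hr)).
move=> H; apply: (span_sub _ (H _ _ _)).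
- by move=> z zi; rewrite mem_cat zi orbT.
- by rewrite row_mx0.
- by move=> ??; rewrite add_row_mx addr0.
- by move=> ??; rewrite scale_row_mx scaler0.
Qed.

Definition divM (a b : R) := exists s c, ~ M s /\ s * b = c * a.
Hypothesis Mval : forall a b, divM a b \/ divM b a.

Lemma divM_refl a : divM a a.
Proof. by exists 1, 1; split. Qed.
Lemma divM_trans a b e : divM a b -> divM b e -> divM a e.
Proof.
move=> [s [c [Ms hs]]] [s' [c' [Ms' hs']]]; exists (s * s'), (c' * c); split.
  exact: Mmul.
have -> : s * s' * e = s * (s' * e) by ring.
by rewrite hs' mulrCA hs; ring.
Qed.

Lemma min_seq (l : seq R) : l != [::] -> exists2 a, a \in l & forall b, b \in l -> divM a b.
Proof.
elim: l => // x [|y l] IH _.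
  by exists x; rewrite ?mem_seq1 // => b; rewrite mem_seq1 => /eqP ->; apply: divM_refl.
have [t tl ht] := IH isT.
have [hxt|htx] := Mval x t.
  exists x; first by rewrite mem_head.
  move=> b; rewrite in_cons => /orP [/eqP ->|bl]; first exact: divM_refl.
  exact: divM_trans hxt (ht _ bl).
exists t; first by rewrite in_cons tl orbT.
move=> b; rewrite in_cons => /orP [/eqP ->|bl]; first exact: htx.
exact: ht.
Qed.

Lemma common_mul (a : R) (l : seq R) : (forall b, b \in l -> divM a b) ->
  exists S, ~ M S /\ forall b, b \in l -> exists c, S * b = c * a.
Proof.
elim: l => [|x l IH] h; first by exists 1; split.
have [S [MS hS]] : exists S, ~ M S /\ forall b, b \in l -> exists c, S * b = c * a.
  by apply: IH => b bl; apply: h; rewrite in_cons bl orbT.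
have [s [c [Ms hs]]] := h x (mem_head _ _).
exists (S * s); split; first exact: Mmul.
move=> b; rewrite in_cons => /orP [/eqP ->|bl].
  by exists (S * c); rewrite -mulrA hs mulrA.
have [c' hc'] := hS b bl; exists (s * c').
by rewrite mulrAC hc'; ring.
Qed.

Lemma tp_inv n (i j : 'I_n) : tperm_mx i j *m tperm_mx i j = 1%:M :> 'M[R]_n.
Proof. by rewrite /tperm_mx -perm_mxM tperm2 perm_mx1. Qed.
Lemma tp_l m n (i1 i2 : 'I_m) (A : 'M[R]_(m, n)) i j :
  (tperm_mx i1 i2 *m A) i j = A (tperm i1 i2 i) j.
Proof. by rewrite -row_permE mxE. Qed.
Lemma tp_r m n (j1 j2 : 'I_n) (A : 'M[R]_(m, n)) i j :
  (A *m tperm_mx j1 j2) i j = A i (tperm j1 j2 j).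
Proof. by rewrite /tperm_mx -{1}tpermV -col_permE mxE. Qed.

Lemma Tr_step p w (Q : 'M[R]_(p.+1, w.+1)) : (forall Q3 : 'M_(p, w), Tr Q3) -> Tr Q.
Proof.
move=> IH.
pose l := [seq Q ij.1 ij.2 | ij <- enum {: 'I_p.+1 * 'I_w.+1}].
have mem_l : forall i j, Q i j \in l.
  by move=> i j; apply/mapP; exists (i, j); rewrite ?mem_enum.
have [a al ha] : exists2 a, a \in l & forall b, b \in l -> divM a b.
  apply: min_seq; apply/eqP => e; have := mem_l 0 0; by rewrite e.
have [[i0 j0] _ ea] := mapP al; rewrite /= in ea.
have [S [MS hS]] := common_mul ha.
apply: (@Tr_inv _ _ Q (tperm_mx 0 i0) (tperm_mx 0 i0) (tperm_mx 0 j0) (tperm_mx 0 j0) 1 1) => //;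
  try by rewrite tp_inv.
have hQ2' : forall i j, exists c, S * (tperm_mx 0 i0 *m Q *m tperm_mx 0 j0) i j
    = c * (tperm_mx 0 i0 *m Q *m tperm_mx 0 j0) 0 0.
  by move=> i j; rewrite !tp_r !tp_l !tpermL -ea; apply: hS; apply: mem_l.
move: (tperm_mx 0 i0 *m Q *m tperm_mx 0 j0 : 'M_(1 + p, 1 + w)) hQ2' => Q2 hQ2'.
have e0p : lshift p (0 : 'I_1) = 0 :> 'I_(1 + p) by apply/val_inj.
have e0w : lshift w (0 : 'I_1) = 0 :> 'I_(1 + w) by apply/val_inj.
pose a0 := Q2 (lshift p 0) (lshift w 0).
have hQ2 : forall i j, exists c, S * Q2 i j = c * a0.
  by move=> i j; rewrite /a0 e0p e0w; apply: hQ2'.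
have [crf hcr] := fin_all_exists (fun j : 'I_w => hQ2 (lshift p 0) (rshift 1 j)).
have [ccf hcc] := fin_all_exists (fun i : 'I_p => hQ2 (rshift 1 i) (lshift w 0)).
pose crow : 'rV_w := \row_j crf j.
pose ccol : 'cV_p := \col_i ccf i.
pose L : 'M_(1 + p) := block_mx 1 0 (- ccol) S%:M.
pose L' : 'M_(1 + p) := block_mx S%:M 0 ccol 1.
pose Rm : 'M_(1 + w) := block_mx 1 (- crow) 0 S%:M.
pose Rm' : 'M_(1 + w) := block_mx S%:M crow 0 1.
have ea1 : ulsubmx Q2 = a0%:M.
  by rewrite [ulsubmx Q2]mx11_scalar; congr (_%:M); rewrite !mxE.
have E1 : - ccol *m ulsubmx Q2 + S%:M *m dlsubmx Q2 = 0.
  rewrite ea1 mul_mx_scalar mul_scalar_mx; apply/matrixP => i j.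
  rewrite (ord1 j) !mxE hcc; ring.
have E2 : ulsubmx Q2 *m - crow + ursubmx Q2 *m S%:M = 0.
  rewrite ea1 mul_mx_scalar mul_scalar_mx; apply/matrixP => i j.
  rewrite (ord1 i) !mxE hcr; ring.
have eB : L *m Q2 *m Rm = block_mx (ulsubmx Q2) 0 0
    ((- ccol *m ursubmx Q2 + S%:M *m drsubmx Q2) *m S%:M).
  rewrite -{1}(submxK Q2) /L /Rm !mulmx_block.
  rewrite !mul1mx !mul0mx !addr0 E1 !mulmx0 !mul0mx !mulmx1 !addr0 !add0r E2.
  done.
apply: (@Tr_inv _ _ Q2 L L' Rm Rm' S S) => //.
- rewrite /L /L' mulmx_block !mulmx0 !mul0mx !mulmx1 !mul1mx !addr0 !add0r.
  by rewrite subrr -scalar_mx_block.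
- rewrite /Rm /Rm' mulmx_block !mulmx0 !mul0mx !mulmx1 !mul1mx !addr0 !add0r.
  by rewrite subrr -scalar_mx_block.
- rewrite /Rm /Rm' mulmx_block !mulmx0 !mul0mx !mulmx1 !mul1mx !addr0 !add0r.
  by rewrite mul_mx_scalar mul_scalar_mx scalerN addNr -scalar_mx_block.
rewrite eB; apply: Tr_block; apply: IH.
Qed.

End Loc.

Section All.
Variables (R : comPzRingType) (M : R -> Prop).
Hypotheses (M1 : ~ M 1) (Mmul : forall a b, ~ M a -> ~ M b -> ~ M (a * b)).
Hypothesis Mval : forall a b, divM M a b \/ divM M b a.

Lemma Tr_all p w (Q : 'M[R]_(p, w)) : Tr M Q.
Proof.
elim: p w Q => [|p IH] w Q.
  move=> _; exists 1; split => //; exists [::]; split => // v _.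
  by rewrite (thinmx0 v) scaler0; apply: span0.
case: w Q => [|w] Q; last by apply: Tr_step => //; apply: IH.
move=> _; exists 1; split => //; exists [seq delta_mx 0 k | k <- enum 'I_p.+1]; split.
  by move=> g _; rewrite /RK thinmx0.
move=> v _; rewrite scale1r (row_sum_delta v); apply: span_sum => k.
by apply: spanZ; apply: spanI; apply/mapP; exists k; rewrite ?mem_enum.
Qed.
End All.


Section Zorn.
Variable R : comPzRingType.

Lemma ideal_opp (I : R -> Prop) x : is_ideal I -> I x -> I (- x).
Proof. by move=> [_ [_ hm]] hx; rewrite -mulN1r; apply: hm. Qed.

Lemma exists_max (J : R -> Prop) : is_ideal J -> ~ J 1 ->
  exists M, is_maximal_ideal M /\ forall x, J x -> M x.
Proof.
move=> iJ nJ1.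
pose P : set (set R) := fun X => X = set0 \/ (is_ideal X /\ (forall x, J x -> X x) /\ ~ X 1).
have [A [PA Amax]] : exists A, P A /\ forall B, (A `<` B)%classic -> ~ P B.
  apply: Zorn_bigcup => F FP Ftot.
  have [ne|e] := pselect (exists X, F X /\ X <> set0); last first.
    left; apply/seteqP; split => x // [X FX Xx]; apply: e; exists X; split => //.
    by move=> X0; rewrite X0 in Xx.
  have [X0 [FX0 X0n]] := ne.
  have hX0 : is_ideal X0 /\ (forall x, J x -> X0 x) /\ ~ X0 1.
    by case: (FP _ FX0).
  have memI : forall X x, F X -> X x -> is_ideal X /\ ~ X 1.
    move=> X x FX Xx; case: (FP _ FX) => [X0e|[? [? ?]]]; last by [].
    by rewrite X0e in Xx.
  right; split; [split; [|split]|split].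
  - by exists X0 => //; case: hX0 => [[]].
  - move=> x y [X FX Xx] [Y FY Yy].
    have [XY|YX] := Ftot _ _ FX FY.
    + exists Y => //; have [[_ [hD _]] _] := memI _ _ FY Yy; apply: hD => //; exact: XY.
    + exists X => //; have [[_ [hD _]] _] := memI _ _ FX Xx; apply: hD => //; exact: YX.
  - move=> r x [X FX Xx]; exists X => //.
    by have [[_ [_ hM]] _] := memI _ _ FX Xx; apply: hM.
  - by move=> x Jx; exists X0 => //; case: hX0 => _ [h _]; apply: h.
  - by move=> [X FX X1]; have [_ ] := memI _ _ FX X1.
have Ane : A <> set0.
  move=> A0; apply: (Amax J); last by right.
  rewrite A0; split; first by move=> x.
  by move=> h; have := h 0; case: iJ => J0 _; move/(_ J0).
case: PA => // [[iA [JA nA1]]].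
exists A; split => //; split => //; split => // J' iJ' AJ'.
have [J'1|nJ'1] := pselect (J' 1); first by right.
left => x; split; last exact: AJ'.
move=> J'x; apply: contrapT => nAx; apply: (Amax J'); last by right; split => //; split => // y /JA /AJ'.
by split => // h; apply: nAx; apply: h.
Qed.

Lemma max_prime (M : R -> Prop) : is_maximal_ideal M ->
  forall a b, ~ M a -> ~ M b -> ~ M (a * b).
Proof.
move=> [[M0 [MD MM]] [nM1 Mmax]] a b na nb Mab.
pose J x := exists m r, M m /\ x = m + r * a.
have iJ : is_ideal J.
  split; first by exists 0, 0; rewrite mul0r addr0.
  split.
    move=> x y [m [r [Mm ->]]] [m' [r' [Mm' ->]]].
    by exists (m + m'), (r + r'); split; [apply: MD|rewrite mulrDl addrACA].
  move=> s x [m [r [Mm ->]]]; exists (s * m), (s * r); split; first exact: MM.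
  by rewrite mulrDr mulrA.
have [h|[m [r [Mm e]]]] := Mmax J iJ (fun x Mx => ex_intro _ x (ex_intro _ 0 (conj Mx (esym (etrans (congr1 _ (mul0r _)) (addr0 _)))))).
  by apply: na; apply/h; exists 0, 1; rewrite mul1r add0r.
apply: nb; have -> : b = b * m + r * (a * b) by rewrite -[b in LHS]mulr1 e; ring.
apply: MD; first exact: MM.
exact: MM.
Qed.
End Zorn.


Lemma transfer (R : comPzRingType) (ar : arithmetic R) p w (Q : 'M[R]_(p,w)) g (G : 'M_(w,g)) :
  (forall y : 'cV_w, Q *m y = 0 -> exists c : 'cV_g, y = G *m c) -> Q *m G = 0 ->
  exists h (C : 'M_(h,p)), forall v : 'rV_p, v *m Q = 0 <-> exists z : 'rV_h, v = z *m C.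
Proof.
move=> hG QG.
pose J x := exists s : seq 'rV_p, (forall γ, γ \in s -> γ *m Q = 0) /\
  forall v, v *m Q = 0 -> spn s (x *: v).
have iJ : is_ideal J.
  split; first by exists [::]; split => // v _; rewrite scale0r; apply: span0.
  split.
    move=> x y [s1 [hs1 hsp1]] [s2 [hs2 hsp2]]; exists (s1 ++ s2); split.
      by move=> z; rewrite mem_cat => /orP [] ?; [apply: hs1|apply: hs2].
    move=> v hv; rewrite scalerDl; apply: spanD.
      by apply: (span_sub _ (hsp1 _ hv)) => z zi; rewrite mem_cat zi.
    by apply: (span_sub _ (hsp2 _ hv)) => z zi; rewrite mem_cat zi orbT.
  move=> r x [s [hs hsp]]; exists s; split => // v hv.
  by rewrite -scalerA; apply: spanZ; apply: hsp.
have [J1|nJ1] := pselect (J 1).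
  case: J1 => s [hs hsp]; exists (size s), (mxs s) => v; split.
    by move=> /hsp; rewrite scale1r => /span_mx.
  by move=> [z ->]; apply: mx_span.
exfalso; have [M [mM JM]] := exists_max iJ nJ1.
have Mmul := max_prime mM.
have M1 : ~ M 1 by case: mM => _ [].
have Mval : forall a b, divM M a b \/ divM M b a.
  by move=> a b; apply: (ar M mM a b).
have hC : FGl M (CK Q).
  exists 1; split => //; exists [seq G *m delta_mx i 0 | i <- enum 'I_g]; split.
    by move=> _ /mapP [i _ ->]; rewrite /CK mulmxA QG mul0mx.
  move=> y /hG [c ->]; rewrite scale1r {1}(matrix_sum_delta c) mulmx_sumr.
  apply: span_sum => i; rewrite big_ord1 -scalemxAr; apply: spanZ; apply: spanI.
  by apply/mapP; exists i; rewrite ?mem_enum.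
have [x [Mx [s [hs hsp]]]] := Tr_all M1 Mmul Mval hC.
by apply: Mx; apply: JM; exists s; split.
Qed.

Lemma exact_next (R : comPzRingType) (ar : arithmetic R) (fpi : self_fp_injective R)
  k0 k1 k2 (A0 : 'M[R]_(k1,k0)) (A1 : 'M[R]_(k2,k1)) :
  (forall v : 'rV_k1, v *m A0 = 0 <-> exists w : 'rV_k2, v = w *m A1) ->
  exists k3 (A2 : 'M[R]_(k3,k2)), forall v : 'rV_k2, v *m A1 = 0 <-> exists w : 'rV_k3, v = w *m A2.
Proof.
move=> ex; apply: (transfer ar (G := A0)).
  move=> y hy; apply: (fp_ext (P := A0) (g := y) fpi).
  by move=> v /ex [w ->]; rewrite -mulmxA hy mulmx0.
apply/row_matrixP => i; rewrite row_mul row0; apply/ex.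
by exists (delta_mx 0 i); rewrite rowE.
Qed.

Set Primitive Projections.
Record stt (R : comPzRingType) := Stt { sm : nat; sn : nat; sA : 'M[R]_(sn, sm) }.
Unset Primitive Projections.

Definition FGker (R : comPzRingType) m n (B : 'M[R]_(n,m)) :=
  exists h (C : 'M[R]_(h,n)), forall v : 'rV_n, v *m B = 0 <-> exists z : 'rV_h, v = z *m C.

Lemma gen_ex (R : comPzRingType) m n (B : 'M[R]_(n,m)) :
  exists hc : {h : nat & 'M[R]_(h,n)}, FGker B ->
    forall v : 'rV_n, v *m B = 0 <-> exists z : 'rV_(projT1 hc), v = z *m projT2 hc.
Proof.
have [[h [C hC]]|nF] := pselect (FGker B).
  by exists (existT _ h C).
by exists (existT (fun h => 'M[R]_(h,n)) 0%N 0) => /nF.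
Qed.

Definition gen (R : comPzRingType) m n (B : 'M[R]_(n,m)) : {h : nat & 'M[R]_(h,n)} :=
  proj1_sig (cid (gen_ex B)).

Lemma genP (R : comPzRingType) m n (B : 'M[R]_(n,m)) : FGker B ->
  forall v : 'rV_n, v *m B = 0 <-> exists z : 'rV_(projT1 (gen B)), v = z *m projT2 (gen B).
Proof. exact: (proj2_sig (cid (gen_ex B))). Qed.

Definition step (R : comPzRingType) (s : stt R) : stt R :=
  @Stt R (sn s) (projT1 (gen (sA s))) (projT2 (gen (sA s))).

Theorem theorem2p4 (R : comPzRingType) :
  arithmetic R -> self_fp_injective R -> lambda_dim_le R 2.
Proof.
move=> ar fpi E [k [A [p [hs [h0 h1]]]]] n.
have e01 := h1 0%N isT.
pose s0 := @Stt R (k 0%N) (k 1%N) (A 0%N).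
pose sq i := iter i (@step R) s0.
pose k' i := sm (sq i).
pose A' : forall i, 'M[R]_(k' i.+1, k' i) := fun i => sA (sq i).
have inv : forall i, FGker (A' i).
  elim=> [|i IH]; first by exists (k 2%N), (A 1%N).
  have := genP IH => ex.
  exact: (exact_next ar fpi ex).
exists k', A', p; split; first exact: hs.
split; first by move=> _; apply: h0.
move=> i _; exact: (genP (inv i)).
Qed.
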